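(* Let $\mathcal{G}$ be a strongly connected digraph with $N$ nodes and consider the distributed quantized weight-balancing algorithm described in the context, with step-size $\gamma(k)=2^{-n}$ for $2^n-1\le k\le 2^{n+1}-2$. If $\Vert\boldsymbol{\epsilon}(k)\Vert_1\ge 2N(N-1)\gamma(k)$, then $\Vert\boldsymbol{\epsilon}(k+N^{2N})\Vert_1\le\Vert\boldsymbol{\epsilon}(k)\Vert_1-2\gamma(k+N^{2N})$.
   Context: $\mathcal{G}=(\mathcal{V},\mathcal{E})$, $\mathcal{V}=\{1,\dots,N\}$, no self-loops; $\mathcal{N}_i^-=\{j:(j,i)\in\mathcal{E}\}$, $\mathcal{N}_i^+=\{j:(i,j)\in\mathcal{E}\}$, $d_i^+=|\mathcal{N}_i^+|$. Algorithm: $a_{ij}(0)=1$ if $j\in\mathcal{N}_i^-$ and $0$ otherwise; $b_i(k)=\sum_{j\in\mathcal{N}_i^-}a_{ij}(k)-\sum_{j\in\mathcal{N}_i^+}a_{ji}(k)$; $n_i(k)=1$ if $b_i(k)\ge d_i^+\gamma(k)$, else $0$; $a_{ij}(k+1)=a_{ij}(k)+n_j(k)\gamma(k)$ for $j\in\mathcal{N}_i^-$. $\boldsymbol{\epsilon}(k)=(|b_i(k)|)_{i=1}^N$. *)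

(* Defs.v *)
From mathcomp Require Import all_boot all_order all_algebra.
Set Implicit Arguments. Unset Strict Implicit. Unset Printing Implicit Defensive.
Import Order.TTheory GRing.Theory Num.Theory.
Local Open Scope ring_scope.

Section QWB.
Variables (R : realFieldType) (N : nat) (E : rel 'I_N).
(* E j i  <->  (j,i) is an edge, i.e. j \in N_i^-  (and i \in N_j^+). *)

(* gamma(k) = 2^{-n} for 2^n - 1 <= k <= 2^(n+1) - 2, i.e. n = floor(log2(k+1)) *)
Definition gamma (k : nat) : R := (2%:R)^-1 ^+ (trunc_log 2 k.+1).

Definition outdeg (i : 'I_N) : nat := #|[pred j | E i j]|.

Definition balance (a : 'I_N -> 'I_N -> R) (i : 'I_N) : R :=
  \sum_(j | E j i) a i j - \sum_(j | E i j) a j i.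

Definition nflag (a : 'I_N -> 'I_N -> R) (k : nat) (i : 'I_N) : bool :=
  (outdeg i)%:R * gamma k <= balance a i.

Fixpoint wts (k : nat) : 'I_N -> 'I_N -> R :=
  match k with
  | 0 => fun i j => if E j i then 1 else 0
  | k'.+1 => fun i j =>
      if E j i then wts k' i j + (if nflag (wts k') k' j then gamma k' else 0)
      else wts k' i j
  end.

Definition b (k : nat) (i : 'I_N) : R := balance (wts k) i.

Definition eps1 (k : nat) : R := \sum_i `|b k i|.

End QWB.

(* Main.v *)
Require Import Defs.
From mathcomp Require Import all_boot all_order all_algebra.
From mathcomp Require Import zify ring lra.
Set Implicit Arguments. Unset Strict Implicit. Unset Printing Implicit Defensive.
Import Order.TTheory GRing.Theory Num.Theory.
Local Open Scope ring_scope.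

Section Main.
Variables (R : realFieldType) (N : nat) (E : rel 'I_N).

Local Notation gam := (gamma R).
Local Notation w := (wts R E).
Local Notation bb := (b R E).
Local Notation nf t := (nflag E (wts R E t) t).
Local Notation d := (outdeg E).

Definition mc (t : nat) (i : 'I_N) : nat := (\sum_(j | E j i) nf t j)%N.

Lemma gam_gt0 t : 0 < gam t.
Proof. by rewrite /gamma; apply: exprn_gt0; rewrite invr_gt0 ltr0n. Qed.

Lemma gam_ge0 t : 0 <= gam t.
Proof. exact/ltW/gam_gt0. Qed.

Lemma gam_anti s t : (s <= t)%N -> gam t <= gam s.
Proof.
move=> st; rewrite /gamma.
have h : (trunc_log 2 s.+1 <= trunc_log 2 t.+1)%N by apply: leq_trunc_log.
rewrite -(subnKC h) exprD; apply: ler_piMr.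
- by apply/ltW/exprn_gt0; rewrite invr_gt0 ltr0n.
- by apply: exprn_ile1; rewrite ?invr_ge0 ?ler0n // invf_le1 // ?ler1n // ltr0n.
Qed.

Lemma gam_mul s t : (s <= t)%N -> exists e : nat, gam s = 2%:R ^+ e * gam t.
Proof.
move=> st; rewrite /gamma.
have h : (trunc_log 2 s.+1 <= trunc_log 2 t.+1)%N by apply: leq_trunc_log.
exists (trunc_log 2 t.+1 - trunc_log 2 s.+1)%N.
rewrite -(subnKC h) addKn exprD mulrCA -exprMn mulfV ?expr1n ?mulr1 //.
by rewrite pnatr_eq0.
Qed.

Lemma b_rec t i : bb t.+1 i =
  bb t i - (nf t i)%:R * (d i)%:R * gam t + (mc t i)%:R * gam t.
Proof.
rewrite /b /balance /=.
rewrite (eq_bigr (fun j => w t i j + (if nf t j then gam t else 0))); last first.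
  by move=> j ->.
rewrite (eq_bigr (fun j => w t j i + (if nf t i then gam t else 0)) (P := fun j => E i j)); last first.
  by move=> j ->.
rewrite !big_split /= sumr_const.
have -> : \sum_(j | E j i) (if nf t j then gam t else 0) = (mc t i)%:R * gam t.
  rewrite /mc natr_sum mulr_suml; apply: eq_bigr => j _.
  by case: (nf t j); rewrite ?mul1r ?mul0r.
rewrite /outdeg.
have -> : #|[pred j | E i j]| = #|fun j => E i j| by apply: eq_card.
case: (nf t i) => /=; rewrite ?mul1r ?mul0r ?mulr0n ?subr0; last lra.
rewrite -mulr_natl; lra.
Qed.


Definition isM (g x : R) := exists z : int, x = z%:~R * g.

Lemma isM0 g : isM g 0. Proof. by exists 0; rewrite mul0r. Qed.
Lemma isMD g x y : isM g x -> isM g y -> isM g (x + y).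
Proof. by move=> [a ->] [c ->]; exists (a + c); rewrite intrD mulrDl. Qed.
Lemma isMN g x : isM g x -> isM g (- x).
Proof. by move=> [a ->]; exists (- a); rewrite intrN mulNr. Qed.
Lemma isMB g x y : isM g x -> isM g y -> isM g (x - y).
Proof. by move=> hx hy; apply: isMD => //; apply: isMN. Qed.
Lemma isMsum g (P : pred 'I_N) (F : 'I_N -> R) :
  (forall j, P j -> isM g (F j)) -> isM g (\sum_(j | P j) F j).
Proof.
move=> h; elim/big_rec: _ => [|j x Pj hx]; first exact: isM0.
by apply: isMD => //; apply: h.
Qed.
Lemma isM_gam t : isM (gam t) (gam t). Proof. by exists 1; rewrite mul1r. Qed.

Lemma isM_step s t x : (s <= t)%N -> isM (gam s) x -> isM (gam t) x.
Proof.
move=> st [z ->]; have [e ->] := gam_mul st.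
by exists (z * (2 ^ e)%:Z); rewrite mulrA intrM; congr (_ * _); rewrite -natrX.
Qed.

Lemma w_isM t i j : isM (gam t) (w t i j).
Proof.
elim: t i j => [|t IH] i j /=.
  have -> : gam 0 = 1 by rewrite /gamma trunc_log1 expr0.
  by case: (E j i); [exists 1|exists 0]; rewrite ?mul1r ?mul0r.
apply: (@isM_step t) => //; case: (E j i) => //.
by apply: isMD => //; case: (nf t j); [apply: isM_gam | apply: isM0].
Qed.

Lemma b_isM t i : isM (gam t) (bb t i).
Proof. by apply: isMB; apply: isMsum => j _; apply: w_isM. Qed.

Lemma isM_neg g x : 0 < g -> isM g x -> x < 0 -> x <= - g.
Proof.
move=> g0 [z ->] h.
have hz : z < 0 by rewrite pmulr_llt0 // ltrz0 in h.
have hz' : z <= -1 by lia.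
rewrite -mulN1r ler_pM2r //.
have -> : (-1 : R) = (-1 : int)%:~R by rewrite intrN.
by rewrite ler_int.
Qed.

Lemma sum_b0 t : \sum_i bb t i = 0.
Proof.
rewrite /b /balance sumrB; apply/eqP; rewrite subr_eq0; apply/eqP.
rewrite (exchange_big_dep xpredT) //=.
Qed.


Definition P t := \sum_i Num.max (bb t i) 0.
Definition xx t i := bb t i - (nf t i)%:R * (d i)%:R * gam t.
Definition hit t i := (0 < mc t i)%N && (xx t i < 0).

Lemma nfE t i : nf t i = ((d i)%:R * gam t <= bb t i).
Proof. by []. Qed.

Lemma eps1P t : eps1 R E t = 2%:R * P t.
Proof.
have h : eps1 R E t = \sum_i (2%:R * Num.max (bb t i) 0 - bb t i).
  apply: eq_bigr => i _.
  case: (lerP 0 (bb t i)) => h.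
    by rewrite ger0_norm //; lra.
  by rewrite ltr0_norm //; lra.
by rewrite h sumrB sum_b0 subr0 -mulr_sumr.
Qed.

Lemma max_step t i : Num.max (bb t.+1 i) 0 <=
  Num.max (bb t i) 0 - (nf t i)%:R * (d i)%:R * gam t + (mc t i)%:R * gam t
  - (if hit t i then gam t else 0).
Proof.
have g0 := gam_gt0 t.
have m0 : 0 <= (mc t i)%:R * gam t by rewrite mulr_ge0 ?ler0n ?ltW.
rewrite b_rec /hit /xx.
have d0 : 0 <= (d i)%:R * gam t by rewrite mulr_ge0 ?ler0n ?ltW.
case hn: (nf t i).
  move: hn; rewrite nfE => hn.
  rewrite /= mul1r.
  have -> : (bb t i - (d i)%:R * gam t < 0) = false by apply/negbTE; rewrite -leNgt subr_ge0.
  rewrite andbF subr0 (max_l (le_trans d0 hn)) max_l //; lra.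
rewrite /= !mul0r !subr0.
case: (lerP 0 (bb t i)) => hb.
  by rewrite andbF subr0 max_l //; lra.
rewrite andbT add0r.
have hb' := isM_neg g0 (b_isM t i) hb.
case: (posnP (mc t i)) => hm.
  by rewrite hm /= mul0r addr0 subr0 max_r // ltW.
rewrite /= ge_max; apply/andP; split.
  lra.
rewrite subr_ge0 -[X in X <= _]mul1r ler_pM2r // ler1n //.
Qed.


Lemma sum_mc t : (\sum_i mc t i = \sum_i nf t i * d i)%N.
Proof.
rewrite /mc (exchange_big_dep xpredT) //=; apply: eq_bigr => j _.
by rewrite sum_nat_const mulnC /outdeg.
Qed.

Lemma P_step t : P t.+1 <= P t - \sum_i (if hit t i then gam t else 0).
Proof.
rewrite {1}/P; apply: le_trans (ler_sum _ (fun i _ => max_step t i)) _.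
have e : \sum_i (mc t i)%:R * gam t = \sum_i (nf t i)%:R * (d i)%:R * gam t.
  rewrite -!mulr_suml -natr_sum sum_mc natr_sum; congr (_ * _).
  by apply: eq_bigr => i _; rewrite natrM.
rewrite sumrB big_split /= sumrB -/(P t) e; lra.
Qed.

Lemma P_step1 t : P t.+1 <= P t.
Proof.
apply: le_trans (P_step t) _; rewrite lerBlDr lerDl.
by apply: sumr_ge0 => i _; case: ifP => // _; exact: gam_ge0.
Qed.

Lemma P_mono s t : (s <= t)%N -> P t <= P s.
Proof.
move=> st; rewrite -(subnKC st); elim: (t - s)%N => [|n IH]; first by rewrite addn0.
by rewrite addnS; apply: le_trans IH; apply: P_step1.
Qed.

Lemma P_hit t i : hit t i -> P t.+1 <= P t - gam t.
Proof.
move=> h; apply: le_trans (P_step t) _; rewrite lerB //.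
rewrite (bigD1 i) //= h lerDl.
by apply: sumr_ge0 => j _; case: ifP => // _; exact: gam_ge0.
Qed.


Lemma d_le (irr : irreflexive E) i : (d i <= N.-1)%N.
Proof.
rewrite /outdeg; apply: (@leq_trans #|predC1 i|); last by rewrite cardC1 card_ord.
apply: subset_leq_card.
by apply/subsetP => j; rewrite !inE => h; apply/eqP => ji; move: h; rewrite ji irr.
Qed.

Lemma mc_le (irr : irreflexive E) t i : (mc t i <= N.-1)%N.
Proof.
rewrite /mc; apply: leq_trans (_ : \sum_(j | E j i) 1 <= _)%N.
  by apply: leq_sum => j _; case: (nf t j).
rewrite sum1_card; apply: (@leq_trans #|predC1 i|); last by rewrite cardC1 card_ord.
apply: subset_leq_card.
apply/subsetP => j; rewrite !inE unfold_in /= => h; apply/eqP => ji; move: h.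
by rewrite ji irr.
Qed.

Section Window.
Variables (k L : nat).
Hypothesis NH : forall t, (k <= t)%N -> (t < k + L)%N -> forall i, ~~ hit t i.

Lemma neg_const n : (n <= L)%N -> forall i,
  (bb k i < 0 -> bb (k + n)%N i = bb k i) /\ (0 <= bb k i -> 0 <= bb (k + n)%N i).
Proof.
elim: n => [|n IH] hn i; first by rewrite addn0.
have [IH1 IH2] := IH (ltnW hn) i.
have nh : ~~ hit (k + n)%N i by apply: NH; [exact: leq_addr | rewrite ltn_add2l].
move: nh; rewrite /hit /xx addnS => nh.
have g0 := gam_gt0 (k + n)%N.
split.
  move=> hb; rewrite b_rec -(IH1 hb).
  have hf : nf (k + n)%N i = false.
    apply/negbTE; rewrite nfE -ltNge (IH1 hb).
    by apply: lt_le_trans hb _; rewrite mulr_ge0 ?ler0n ?ltW.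
  move: nh; rewrite hf /= !mul0r subr0 (IH1 hb) hb andbT -leqNgt leqn0 => /eqP ->.
  by rewrite mul0r addr0.
move=> hb; have hb' := IH2 hb; rewrite b_rec.
have m0 : 0 <= (mc (k + n)%N i)%:R * gam (k + n)%N by rewrite mulr_ge0 ?ler0n ?ltW.
case hf: (nf (k + n)%N i).
  move: hf; rewrite nfE => hf; rewrite mul1r; lra.
by rewrite mul0r mul0r subr0; lra.
Qed.

Lemma P_const n : (n <= L)%N -> P (k + n)%N = P k.
Proof.
move=> hn.
have e t : P t = \sum_i (Num.max (bb t i) 0 - bb t i).
  by rewrite sumrB sum_b0 subr0.
rewrite !e; apply: eq_bigr => i _.
have [h1 h2] := neg_const hn i.
case: (lerP 0 (bb k i)) => h.
  have := h2 h; case: (lerP 0 (bb (k + n)%N i)) => // _ _; lra.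
by rewrite (h1 h) max_r ?ltW.
Qed.


Definition Rs s n y := (\sum_(s <= t < s + n) mc t y)%N.
Definition Fs s n y := (\sum_(s <= t < s + n) nf t y)%N.

Lemma block_acc y s n : (forall t, (s <= t)%N -> (t < s + n)%N -> ~~ nf t y) ->
  bb s y + gam (s + n)%N * (Rs s n y)%:R <= bb (s + n)%N y.
Proof.
elim: n => [|n IH] h.
  by rewrite /Rs addn0 big_geq // mulr0 addr0.
have IH' : bb s y + gam (s + n)%N * (Rs s n y)%:R <= bb (s + n)%N y.
  apply: IH => t h1 h2; apply: h => //; apply: ltn_trans h2 _; rewrite ltn_add2l //.
rewrite /Rs addnS big_nat_recr ?leq_addr //= -/(Rs s n y) b_rec.
have -> : nf (s + n)%N y = false by apply/negbTE/h; rewrite ?leq_addr // ltn_add2l.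
rewrite mul0r mul0r subr0 natrD.
have hg := gam_anti (leqnSn (s + n)%N).
have r0 : 0 <= (Rs s n y)%:R + (mc (s + n)%N y)%:R :> R by rewrite -natrD ler0n.
have := ler_wpM2r r0 hg.
have : gam (s + n)%N * (mc (s + n)%N y)%:R = (mc (s + n)%N y)%:R * gam (s + n)%N by rewrite mulrC.
lra.
Qed.

Lemma block (irr : irreflexive E) y s n : (2 <= N)%N -> 0 <= bb s y ->
  (forall t, (s <= t)%N -> (t < s + n)%N -> ~~ nf t y) -> (Rs s n y + 3 <= 2 * N)%N.
Proof.
move=> N2 b0 h; case: n h => [|n] h.
  by rewrite /Rs addn0 big_geq //; lia.
have h' : forall t, (s <= t)%N -> (t < s + n)%N -> ~~ nf t y.
  by move=> t h1 h2; apply: h => //; apply: ltn_trans h2 _; rewrite ltn_add2l.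
have acc := block_acc h'.
have nfn : ~~ nf (s + n)%N y by apply: h; rewrite ?leq_addr // ltn_add2l.
move: nfn; rewrite nfE -ltNge => nfn.
have g0 := gam_gt0 (s + n)%N.
have lt : (Rs s n y < d y)%N.
  rewrite -(ltr_nat R) -(ltr_pM2l g0) [_ * (d y)%:R]mulrC.
  lra.
have e : Rs s n.+1 y = (Rs s n y + mc (s + n)%N y)%N.
  by rewrite /Rs addnS big_nat_recr ?leq_addr.
have := mc_le irr (s + n)%N y; have := d_le irr y.
rewrite e; lia.
Qed.

Lemma split_sum (f : nat -> nat) s n m : (m < n)%N ->
  (\sum_(s <= t < s + n) f t = \sum_(s <= t < s + m) f t + f (s + m)%N
     + \sum_((s + m).+1 <= t < (s + m).+1 + (n - m.+1)) f t)%N.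
Proof.
move=> mn.
have e : (s + n = (s + m).+1 + (n - m.+1))%N by lia.
rewrite e (@big_cat_nat _ _ _ (s + m)%N) ?leq_addr //=; last by lia.
by rewrite (@big_ltn _ _ _ (s + m)%N) ?addnA //; lia.
Qed.

Lemma rcv_bound (irr : irreflexive E) y : (2 <= N)%N ->
  (forall t, (k <= t)%N -> (t <= k + L)%N -> 0 <= bb t y) ->
  forall n s, (k <= s)%N -> (s + n <= k + L)%N ->
  (Rs s n y + 1 <= N * N * (Fs s n y + 1))%N.
Proof.
move=> N2 hy n0; elim: n0.+1 {-2}n0 (ltnSn n0) => // M IH n hn s ks sn.
have [ex|nex] := boolP [exists m : 'I_n, nf (s + m)%N y]; last first.
  have h : forall t, (s <= t)%N -> (t < s + n)%N -> ~~ nf t y.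
    move=> t h1 h2; have tn : (t - s < n)%N by lia.
    move: nex; rewrite negb_exists => /forallP /(_ (Ordinal tn)) /=.
    by rewrite subnKC.
  have := block irr N2 (hy s ks (leq_trans (leq_addr _ _) sn)) h.
  nia.
have exP : exists m, (m < n)%N && nf (s + m)%N y.
  by case/existsP: ex => m hm; exists m; rewrite ltn_ord hm.
case: (ex_minnP exP) => m /andP[mn fm] mmin.
have h : forall t, (s <= t)%N -> (t < s + m)%N -> ~~ nf t y.
  move=> t h1 h2; apply/negP => ft.
  have := mmin (t - s)%N; rewrite subnKC // ft andbT.
  have tn : (t - s < n)%N by lia.
  by move/(_ tn); lia.
have hb := block irr N2 (hy s ks (leq_trans (leq_addr _ _) sn)) h.
have hF0 : Fs s m y = 0%N.
  rewrite /Fs big_nat_cond big1 // => t /andP[/andP[h1 h2] _].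
  by rewrite (negbTE (h t h1 h2)).
have e1 : Rs s n y = (Rs s m y + mc (s + m)%N y + Rs (s + m).+1 (n - m.+1) y)%N.
  exact: split_sum.
have e2 : Fs s n y = (Fs s m y + nf (s + m)%N y + Fs (s + m).+1 (n - m.+1) y)%N.
  exact: split_sum.
have hI := IH (n - m.+1)%N ltac:(lia) (s + m).+1 ltac:(lia) ltac:(lia).
have := mc_le irr (s + m)%N y.
rewrite e1 e2 hF0 fm /=.
have NN : (3 * N <= N * N + 4)%N by nia.
nia.
Qed.

Lemma win_sign y t : (k <= t)%N -> (t <= k + L)%N ->
  (bb k y < 0 -> bb t y < 0) /\ (0 <= bb k y -> 0 <= bb t y).
Proof.
move=> h1 h2; have hn : (t - k <= L)%N by lia.
have [a c] := neg_const hn y; rewrite subnKC // in a c.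
by split => // h; rewrite a.
Qed.

Lemma nf_neg t y : bb t y < 0 -> nf t y = false.
Proof.
move=> h; apply/negbTE; rewrite nfE -ltNge; apply: lt_le_trans h _.
by rewrite mulr_ge0 ?ler0n ?gam_ge0.
Qed.

Lemma nf_mc t x y : E x y -> (nf t x <= mc t y)%N.
Proof. by move=> exy; rewrite /mc (bigD1 x) //= leq_addr. Qed.

Lemma edge (irr : irreflexive E) x y : (2 <= N)%N -> E x y ->
  (Fs k L x + 1 <= N * N * (Fs k L y + 1))%N.
Proof.
move=> N2 exy.
case: (ltrP (bb k y) 0) => hy.
  have -> : Fs k L x = 0%N.
    rewrite /Fs big_nat_cond big1 // => t /andP[/andP[h1 h2] _].
    apply/eqP; rewrite eqb0; apply/negP => fx.
    have hy' := (win_sign y h1 (ltnW h2)).1 hy.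
    have z : (nf t y)%:R * (d y)%:R * gam t = 0 :> R by rewrite (nf_neg hy') mul0r mul0r.
    have := NH h1 h2 y; rewrite /hit /xx z subr0 hy' andbT.
    by have := nf_mc t exy; rewrite fx; lia.
  nia.
have hb := rcv_bound irr N2 (fun t h1 h2 => (win_sign y h1 h2).2 hy) (leqnn k) (leqnn _).
apply: leq_trans hb; rewrite leq_add2r /Fs /Rs; apply: leq_sum => t _.
exact: nf_mc.
Qed.

Lemma pathb (irr : irreflexive E) x p : (2 <= N)%N -> path E x p -> bb k (last x p) < 0 ->
  (Fs k L x + 1 <= (N * N) ^ size p)%N.
Proof.
move=> N2; elim: p x => [|y p IH] x /=.
  move=> _ hx; have -> : Fs k L x = 0%N; last by [].
  rewrite /Fs big_nat_cond big1 // => t /andP[/andP[h1 h2] _].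
  have hx' := (win_sign x h1 (ltnW h2)).1 hx.
  by rewrite nf_neg.
move=> /andP[exy py] hl.
have := IH y py hl; have := edge irr N2 exy; rewrite expnS; nia.
Qed.

Lemma node_bound (irr : irreflexive E) (conn : forall i j, connect E i j) x w :
  (2 <= N)%N -> bb k w < 0 -> (Fs k L x + 1 <= (N * N) ^ N.-1)%N.
Proof.
move=> N2 hw; have /connectP [p px pw] := conn x w.
rewrite pw in hw; case: (shortenP px) hw => p' px' up' _ hl.
have hs : (size p' <= N.-1)%N.
  have := uniq_leq_size (s2 := enum 'I_N) up' (fun z _ => mem_enum _ z).
  by rewrite size_enum_ord /=; lia.
apply: leq_trans (pathb irr N2 px' hl) _.
by apply: leq_pexp2l => //; nia.
Qed.

Lemma count_fires : (forall t, (k <= t)%N -> (t < k + L)%N -> exists i, nf t i) ->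
  (L <= \sum_i Fs k L i)%N.
Proof.
move=> hf; rewrite /Fs exchange_big /=.
apply: (@leq_trans (\sum_(k <= t < k + L) 1)%N).
  by rewrite sum_nat_const_nat muln1; lia.
rewrite big_nat_cond [X in (_ <= X)%N]big_nat_cond; apply: leq_sum => t /andP[/andP[h1 h2] _].
have [i hi] := hf t h1 h2; by rewrite (bigD1 i) //= hi.
Qed.

Lemma fires (irr : irreflexive E) (x0 : 'I_N) : (forall i, (0 < d i)%N) ->
  (N * N.-1)%:R * gam k <= P k ->
  forall t, (k <= t)%N -> (t < k + L)%N -> exists i, nf t i.
Proof.
move=> dpos hg t h1 h2.
case: (boolP [exists i, nf t i]) => [/existsP [i hi]|ne]; first by exists i.
exfalso.
have Pt : P t = P k by have := @P_const (t - k)%N ltac:(lia); rewrite subnKC.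
have lt : P t < \sum_i (d i)%:R * gam t.
  rewrite /P; apply: ltr_sum.
    by apply/hasP; exists x0 => //; rewrite mem_index_enum.
  move=> i _; rewrite gt_max; apply/andP; split.
    by move: ne; rewrite negb_exists => /forallP /(_ i); rewrite nfE -ltNge.
  by rewrite mulr_gt0 ?gam_gt0 // ltr0n.
have le1 : \sum_i (d i)%:R * gam t <= \sum_(i < N) (N.-1)%:R * gam t.
  apply: ler_sum => i _; rewrite ler_pM2r ?gam_gt0 // ler_nat; exact: d_le.
rewrite sumr_const card_ord in le1.
have e : ((N.-1)%:R * gam t) *+ N = (N * N.-1)%:R * gam t.
  by rewrite -mulr_natl mulrA -natrM.
rewrite e in le1.
have le2 : (N * N.-1)%:R * gam t <= (N * N.-1)%:R * gam k.
  by rewrite ler_wpM2l ?ler0n // gam_anti.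
lra.
Qed.

End Window.

End Main.

Theorem proposition2 (R : realFieldType) (N : nat) (E : rel 'I_N) :
  (2 <= N)%N ->
  irreflexive E ->
  (forall i j : 'I_N, connect E i j) ->
  forall k : nat,
    (2 * N * (N - 1))%N%:R * gamma R k <= eps1 R E k ->
    eps1 R E (k + N ^ (2 * N)) <= eps1 R E k - 2%:R * gamma R (k + N ^ (2 * N)).
Proof.
move=> N2 irr conn k hyp.
set L := (N ^ (2 * N))%N.
rewrite !eps1P in hyp *.
have hg : (N * N.-1)%:R * gamma R k <= P R E k.
  have e : (2 * N * (N - 1))%N%:R = 2%:R * (N * N.-1)%:R :> R.
    by rewrite -natrM subn1 mulnA.
  rewrite e -mulrA in hyp; lra.
case: (boolP [exists t : 'I_L, [exists i, hit R E (k + t)%N i]]).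
  move=> /existsP [t /existsP [i hi]].
  have h1 := P_hit hi.
  have h2 : P R E (k + L)%N <= P R E (k + t).+1.
    by apply: P_mono; rewrite -addnS leq_add2l.
  have h3 : P R E (k + t)%N <= P R E k by apply: P_mono; rewrite leq_addr.
  have h4 : gamma R (k + L)%N <= gamma R (k + t)%N.
    by apply: gam_anti; rewrite leq_add2l ltnW.
  lra.
move=> nh; exfalso.
have NH : forall t, (k <= t)%N -> (t < k + L)%N -> forall i, ~~ hit R E t i.
  move=> t h1 h2 i; apply/negP => hi; move: nh; rewrite negb_exists => /forallP.
  have tl : (t - k < L)%N by lia.
  move=> /(_ (Ordinal tl)); rewrite negb_exists => /forallP /(_ i) /=.
  by rewrite subnKC // hi.
pose x0 : 'I_N := Ordinal (ltnW N2).
have dpos : forall i, (0 < outdeg E i)%N.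
  move=> i.
  have [j ji] : exists j : 'I_N, j != i.
    case: (i =P x0) => [->|/eqP h]; last by exists x0; rewrite eq_sym.
    by exists (Ordinal N2); apply/eqP => /(congr1 val).
  have /connectP [p pp pl] := conn i j.
  case: p pp pl => [|y p] /=; first by move=> _ e; rewrite e eqxx in ji.
  move=> /andP [iy _] _; apply/card_gt0P; exists y; by rewrite inE.
have [w hw] : exists w, b R E k w < 0.
  case: (boolP [exists w, b R E k w < 0]) => [/existsP [w hw]|ne]; first by exists w.
  exfalso.
  have Pk : P R E k = \sum_i b R E k i.
    apply: eq_bigr => i _; apply: max_l.
    by move: ne; rewrite negb_exists => /forallP /(_ i); rewrite -leNgt.
  rewrite Pk sum_b0 in hg.
  have : 0 < (N * N.-1)%:R * gamma R k by rewrite mulr_gt0 ?gam_gt0 // ltr0n muln_gt0; lia.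
  lra.
have hc := count_fires (fires NH irr x0 dpos hg).
set q := ((N * N) ^ N.-1)%N.
have hb : (\sum_i (Fs R E k L i + 1) <= \sum_(i < N) q)%N.
  by apply: leq_sum => i _; apply: node_bound NH irr conn i w N2 hw.
rewrite big_split /= sum_nat_const card_ord sum_nat_const card_ord in hb.
have eL : L = (N * N * q)%N.
  rewrite /L /q expnMn -expnD -mulnA -!expnS; congr (expn _ _); lia.
have q0 : (0 < q)%N by rewrite expn_gt0 muln_gt0; lia.
have hc' : (N * N * q <= \sum_i Fs R E k L i)%N by rewrite -eL.
move: hb hc'; set S := (\sum_i Fs R E k L i)%N => hb hc'.
have : (N * q <= N * N * q)%N by rewrite -mulnA leq_pmull //; lia.
nia.
Qed.
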